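(* Let $r,s$ be positive integers and let $G$ be a complete $r$-partite graph on $n$ vertices that does not contain $M_{s+1}$ as a subgraph. If $n>2s+1$, then some part of $G$ has order at least $n-s$.
   Context: $M_{s+1}$ denotes the graph consisting of $s+1$ pairwise disjoint edges. *)

(* Defs.v *)
From mathcomp Require Import all_boot.
Set Implicit Arguments. Unset Strict Implicit. Unset Printing Implicit Defensive.

Definition complete_multipartite_rel (T : finType) (P : {set {set T}}) : rel T :=
  fun x y => pblock P x != pblock P y.

Definition complete_partite_with (T : finType) (r : nat) (e : rel T)
    (P : {set {set T}}) : Prop :=
  [/\ partition P [set: T], #|P| = r &
      forall x y, e x y = complete_multipartite_rel P x y].

Definition has_matching (T : finType) (e : rel T) (k : nat) : Prop :=
  exists M : seq (T * T),
    [/\ size M = k, all (fun p => e p.1 p.2) M &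
        uniq (flatten [seq [:: p.1; p.2] | p <- M])].

(* Main.v *)
Require Import Defs.
From mathcomp Require Import all_boot.
From mathcomp Require Import zify.

Definition flat {T : Type} (M : seq (T * T)) := flatten [seq [:: p.1; p.2] | p <- M].

Lemma key (T : finType) (U : eqType) (f : T -> U) k : forall S : {set T},
  (forall z, #|[set w in S | f w == f z]| + k <= #|S|) -> 2 * k <= #|S| ->
  exists M : seq (T * T), [/\ size M = k, all (fun p => f p.1 != f p.2) M,
     uniq (flat M) & all (fun v => v \in S) (flat M)].
Proof.
elim: k => [|k IH] S Hc H2.
  by exists [::].
have Sgt : 0 < #|S| by lia.
case/card_gt0P: Sgt => x0 Hx0.
case: (@arg_maxnP _ x0 (fun v => v \in S) (fun z => #|[set w in S | f w == f z]|) Hx0) => x Hx Hmax.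
case: (pickP [pred w | (w \in S) && (f w != f x)]) => [y /andP[Hy Hfy] | Hnone]; last first.
  have Hsub : S \subset [set w in S | f w == f x].
    apply/subsetP => w Hw; rewrite inE Hw /=.
    by move: (Hnone w); rewrite /= Hw /= => /negbFE.
  have := subset_leq_card Hsub; have := Hc x; lia.
have Hyx : y != x by apply: contraNneq Hfy => ->.
have E1 := cardsD1 x S; rewrite Hx in E1.
have E2 := cardsD1 y (S :\ x); rewrite !inE Hyx Hy /= in E2.
have [M' [Hs Ha Hu Hm]] : exists M : seq (T * T), [/\ size M = k, all (fun p => f p.1 != f p.2) M,
     uniq (flat M) & all (fun v => v \in S :\ x :\ y) (flat M)].
  apply: IH; last by lia.
  move=> z.
  have Hzx : #|[set w in S | f w == f z]| <= #|[set w in S | f w == f x]|.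
    case: (set_0Vmem [set w in S | f w == f z]) => [->|[w]]; first by rewrite cards0.
    rewrite inE => /andP[Hw /eqP Ewz].
    have -> : [set w in S | f w == f z] = [set v in S | f v == f w] by apply/setP => v; rewrite !inE Ewz.
    exact: Hmax.
  set Cz := [set w in S | f w == f z].
  have -> : [set w in S :\ x :\ y | f w == f z] = Cz :\ x :\ y.
    by apply/setP => w; rewrite !inE; case: (w == y); case: (w == x).
  have F1 := cardsD1 x Cz; have F2 := cardsD1 y (Cz :\ x).
  have Hz := Hc z.
  rewrite !inE Hyx Hx Hy /= in F1 F2.
  case: (eqVneq (f x) (f z)) => [Exz | Nxz].
    have Nyz : f y != f z by rewrite -Exz.
    rewrite Exz eqxx (negbTE Nyz) /= in F1 F2; rewrite -/Cz in Hz; rewrite /= in E1; lia.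
  rewrite (negbTE Nxz) /= in F1.
  case: (eqVneq (f y) (f z)) => [Eyz | Nyz].
    rewrite Eyz eqxx /= in F2; rewrite -/Cz in Hz; rewrite /= in E1; lia.
  rewrite (negbTE Nyz) /= in F2.
  set Cx := [set w in S | f w == f x].
  set Cy := [set w in S | f w == f y].
  have Hy1 : 0 < #|Cy| by apply/card_gt0P; exists y; rewrite inE Hy eqxx.
  have D : #|Cz :|: Cx :|: Cy| = #|Cz| + #|Cx| + #|Cy|.
    have I1 : (Cz :|: Cx) :&: Cy = set0.
      apply/setP => w; rewrite !inE; apply/negbTE.
      apply/negP => /andP[/orP[] /andP[_ /eqP E] /andP[_ /eqP E']].
        by move/eqP: Nyz; rewrite -E E'.
      by move/eqP: Hfy; rewrite -E E'.
    have I2 : Cz :&: Cx = set0.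
      apply/setP => w; rewrite !inE; apply/negbTE.
      apply/negP => /andP[/andP[_ /eqP E] /andP[_ /eqP E']].
      by move/eqP: Nxz; rewrite -E E'.
    by rewrite cardsU I1 cards0 subn0 cardsU I2 cards0 subn0.
  have Hsub : Cz :|: Cx :|: Cy \subset S.
    by apply/subsetP => w; rewrite !inE => /orP[/orP[]|] /andP[].
  have := subset_leq_card Hsub; rewrite -/Cz -/Cx in Hzx Hz; rewrite /= in E1; lia.
exists ((x, y) :: M'); split => /=; first by rewrite Hs.
- by rewrite Ha andbT eq_sym.
- rewrite /flat /= -/(flat M') Hu andbT !inE negb_or eq_sym Hyx /=.
  apply/andP; split; apply/negP => /(allP Hm); rewrite !inE ?eqxx //= andbF //.
- rewrite /flat /= -/(flat M') Hx Hy /=.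
  by apply/allP => v /(allP Hm); rewrite !inE => /and3P[].
Qed.

Theorem proposition12 (T : finType) (r s : nat) (e : rel T) (P : {set {set T}}) :
  0 < r -> 0 < s ->
  complete_partite_with r e P ->
  ~ has_matching e s.+1 ->
  2 * s + 1 < #|T| ->
  exists2 A, A \in P & #|T| - s <= #|A|.
Proof.
move=> _ _ [Hpart _ He] Hnm Hn.
case: (pickP [pred A | (A \in P) && (#|T| - s <= #|A|)]) => [A /andP[HA HA']|Hnone].
  by exists A.
exfalso; apply: Hnm.
case/and3P: Hpart => /eqP Hcov Htriv _.
have Hc : forall z : T, z \in cover P by move=> z; rewrite Hcov inE.
have H1 : forall z, #|[set w in [set: T] | pblock P w == pblock P z]| + s.+1 <= #|[set: T]|.
  move=> z; rewrite cardsT.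
  have -> : [set w in [set: T] | pblock P w == pblock P z] = pblock P z.
    by apply/setP => w; rewrite !inE eq_sym eq_pblock.
  have := Hnone (pblock P z); rewrite /= pblock_mem //= => /negbT.
  rewrite -ltnNge. lia.
have H2 : 2 * s.+1 <= #|[set: T]| by rewrite cardsT; lia.
have [M [Hs Ha Hu _]] := @key T _ (pblock P) s.+1 [set: T] H1 H2.
exists M; split => //.
by apply/allP => p /(allP Ha); rewrite He.
Qed.
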